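(* Let $k\geq 1$ and let $\zeta_1,\dots,\zeta_k\in(0,1)$ be real numbers such that $1,\zeta_1,\dots,\zeta_k$ are linearly independent over $\mathbb{Q}$. For every integer $s\geq 2$, with $a_n^{i,(s)}$ and $b_n^{(s)}$ as in the context, $$\min_{1\le i\le k}\liminf_{n\to\infty}\left(\frac{a^{i,(s)}_{n+1}}{a^{i,(s)}_n}\right)^{1/k}\ \leq\ \limsup_{n\to\infty}\frac{b^{(s)}_{n+1}}{b^{(s)}_n}\ \leq\ \min_{1\le i\le k}\limsup_{n\to\infty}\frac{a^{i,(s)}_{n+1}}{a^{i,(s)}_n}.$$
   Context: For an integer $s\ge2$, let $a_1^{i,(s)}<a_2^{i,(s)}<\cdots$ be the positions (after the point) of the nonzero digits in the base-$s$ expansion of $\zeta_i$, i.e. $\zeta_i=\sum_{n\ge1}\alpha_{n,i}s^{-a_n^{i,(s)}}$ with digits $0<\alpha_{n,i}\le s-1$. Let $(b_n^{(s)})_{n\ge1}$ be the increasing enumeration of the set $\{a_n^{i,(s)}:1\le i\le k,\ n\ge1\}$. *)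

(* Defs.v *)
From HB Require Import structures.
From mathcomp Require Import all_boot all_order all_algebra.
From mathcomp Require Import all_classical all_reals all_analysis.
Set Implicit Arguments. Unset Strict Implicit. Unset Printing Implicit Defensive.
Import Order.TTheory GRing.Theory Num.Theory.
Local Open Scope ring_scope.

(* The m-th digit after the point of the base-s expansion of x in (0,1):
   floor(x * s^m) mod s.  For irrational x this is the unique expansion. *)
Definition digit {R : realType} (s : nat) (x : R) (m : nat) : int :=
  (Num.floor (x * (s%:R) ^+ m) %% (s%:Z))%Z.

Definition nz_pos {R : realType} (s : nat) (x : R) : set nat :=
  [set m | (0 < m)%N /\ digit s x m != 0].

Definition increasing_enum (u : nat -> nat) (A : set nat) : Prop :=
  (forall n, (u n < u n.+1)%N) /\ range u = A.

Definition Q_lin_indep1 {R : realType} (k : nat) (z : 'I_k -> R) : Prop :=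
  forall (q0 : rat) (q : 'I_k -> rat),
    ratr q0 + \sum_(i < k) ratr (q i) * z i = 0 -> q0 = 0 /\ forall i, q i = 0.

Definition ratio_seq {R : realType} (u : nat -> nat) : nat -> \bar R :=
  fun n => ((u n.+1)%:R / (u n)%:R : R)%:E.

(* Main.v *)
Require Import Defs.
From HB Require Import structures.
From mathcomp Require Import all_boot all_order all_algebra.
From mathcomp Require Import all_classical all_reals all_analysis.
From mathcomp Require Import lra zify.
Import Order.TTheory GRing.Theory Num.Theory.
Local Open Scope ring_scope.
Local Open Scope classical_set_scope.

Section Gen.
Variable R : realType.
Local Open Scope ereal_scope.

Lemma esup_lt_ev (u : nat -> \bar R) e :
  limn_esup u < e -> exists N, forall n, (N <= n)%N -> u n < e.
Proof.
rewrite /limn_esup /limf_esup => /ereal_inf_lt [_ [V [N _ hN] <-]] hlt.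
exists N => n hn; apply: le_lt_trans hlt.
by apply: ereal_sup_ubound; exists n => //; apply: hN.
Qed.

Lemma esup_le_ev (u : nat -> \bar R) c N :
  (forall n, (N <= n)%N -> u n <= c) -> limn_esup u <= c.
Proof.
move=> h; rewrite /limn_esup /limf_esup; apply: ge_ereal_inf.
exists (ereal_sup (u @` [set n | (N <= n)%N])).
  by exists [set n | (N <= n)%N] => //; exists N.
by apply: ge_ereal_sup => _ [n hn <-]; apply: h.
Qed.

Lemma esup_le_cmp (u v : nat -> \bar R) :
  (forall M, exists N, forall n, (N <= n)%N -> exists m, (M <= m)%N /\ u n <= v m) ->
  limn_esup u <= limn_esup v.
Proof.
move=> h; rewrite /limn_esup /limf_esup.
apply: le_ereal_inf_tmp => _ [V [M _ hM] <-].
have [N hN] := h M.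
apply: ge_ereal_inf; exists (ereal_sup (u @` [set n | (N <= n)%N])).
  by exists [set n | (N <= n)%N] => //; exists N.
apply: ge_ereal_sup => _ [n hn <-].
have [m [hm hle]] := hN n hn.
apply: le_trans hle _; apply: ereal_sup_ubound; exists m => //; exact: hM.
Qed.

Lemma einf_le_io (u : nat -> \bar R) c :
  (forall M, exists m, (M <= m)%N /\ u m <= c) -> limn_einf u <= c.
Proof.
move=> h; rewrite /limn_einf leeNl /limn_esup /limf_esup.
apply: le_ereal_inf_tmp => _ [V [M _ hM] <-].
have [m [hm hle]] := h M.
apply: le_trans (_ : - u m <= _); first by rewrite leeN2.
by apply: ereal_sup_ubound; exists m => //; exact: hM.
Qed.


Lemma einf_ge0 (u : nat -> \bar R) : (forall n, 0 <= u n) -> 0 <= limn_einf u.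
Proof.
move=> h; rewrite /limn_einf leeNr oppe0; apply: (@esup_le_ev _ _ 0%N) => n _.
by rewrite /= leeNl oppe0.
Qed.

Lemma le_eps (x y : \bar R) : (forall e : R, x < e%:E -> y <= e%:E) -> y <= x.
Proof.
move=> h; rewrite leNgt; apply/negP => hxy.
case: x h hxy => [r| |] h hxy.
- case: y hxy h => [t| |] hxy h.
  + rewrite lte_fin in hxy.
    have H := h ((r + t) / 2)%R.
    have : (t%:E <= ((r + t) / 2)%:E) by apply: H; rewrite lte_fin; lra.
    rewrite lee_fin; lra.
  + have H := h (r + 1)%R.
    have : (+oo <= (r + 1)%:E) by apply: H; rewrite lte_fin; lra.
    by rewrite leNgt ltry.
  + by move: hxy; rewrite ?ltxx // ltNge ?leey ?leNye.
- by move: hxy; rewrite ltNge leey.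
- case: y hxy h => [t| |] hxy h.
  + have H := h (t - 1)%R.
    have : (t%:E <= (t - 1)%:E) by apply: H; rewrite ltNyr.
    rewrite lee_fin; lra.
  + have H := h (@GRing.zero R).
    have : (+oo <= (@GRing.zero R)%:E) by apply: H; rewrite ltNyr.
    by rewrite leNgt ltry.
  + by move: hxy; rewrite ?ltxx // ltNge ?leey ?leNye.
Qed.
End Gen.

Local Open Scope nat_scope.

Lemma incr_lt (u : nat -> nat) : (forall n, u n < u n.+1) ->
  forall m n, m < n -> u m < u n.
Proof.
move=> hu m; elim=> // n IH; rewrite ltnS leq_eqVlt => /orP[/eqP->|/IH h].
  exact: hu.
exact: ltn_trans h (hu n).
Qed.
Arguments incr_lt {u} hu m n.


Lemma incr_ltE (u : nat -> nat) : (forall n, u n < u n.+1) ->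
  forall m n, (u m < u n) = (m < n).
Proof.
move=> hu m n; apply/idP/idP; last exact: incr_lt.
apply: contraLR; rewrite -!leqNgt leq_eqVlt => /orP[/eqP->//|h].
have := incr_lt hu _ _ h; lia.
Qed.
Arguments incr_ltE {u} hu m n.


Lemma incr_leE (u : nat -> nat) : (forall n, u n < u n.+1) ->
  forall m n, (u m <= u n) = (m <= n).
Proof. by move=> hu m n; rewrite leqNgt incr_ltE // -leqNgt. Qed.
Arguments incr_leE {u} hu m n.


Lemma incr_ge (u : nat -> nat) : (forall n, u n < u n.+1) -> forall n, n <= u n.
Proof. by move=> hu; elim=> // n IH; apply: leq_ltn_trans IH (hu n). Qed.
Arguments incr_ge {u} hu n.


Lemma bracket (u : nat -> nat) : (forall n, u n < u n.+1) ->
  forall x, u 0 <= x -> exists m, u m <= x < u m.+1.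
Proof.
move=> hu; elim=> [|x IH] h0.
  exists 0; rewrite h0 /=; exact: leq_ltn_trans (leq0n _) (hu 0).
case: (leqP (u 0) x) => hx.
  have [m /andP[h1 h2]] := IH hx.
  case: (ltngtP x.+1 (u m.+1)) => h3.
  - by exists m; rewrite h3 andbT; apply: leq_trans h1 (leqnSn x).
  - by move: h2 h3; lia.
  - by exists m.+1; rewrite h3 leqnn hu.
exists 0; have := hu 0; lia.
Qed.
Arguments bracket {u} hu x.


Lemma io k (P : 'I_k -> nat -> Prop) (f : 'I_k -> nat -> nat)
  (hf : forall i n, f i n < f i n.+1) N :
  (forall n, N <= n -> exists i m, n <= f i m /\ P i m) ->
  exists i, forall M, exists m, M <= m /\ P i m.
Proof.
move=> h; apply: contrapT => hn.
have hex : forall i, exists M, forall m, M <= m -> ~ P i m.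
  move=> i; apply: contrapT => hi; apply: hn; exists i => M.
  apply: contrapT => hM; apply: hi; exists M => m hm hp; apply: hM.
  by exists m.
case: (boolp.choice hex) => Mf hMf.
have [i [m [h1 h2]]] := h (N + \max_i f i (Mf i)) (leq_addr _ _).
apply: (hMf i m) h2; rewrite -(incr_leE (hf i)).
apply: leq_trans (@leq_bigmax _ (fun i => f i (Mf i)) i) _.
apply: leq_trans h1; exact: leq_addl.
Qed.

Local Open Scope ring_scope.

Section Comb.
Variables (k : nat) (A : 'I_k -> set nat) (a : 'I_k -> nat -> nat) (b : nat -> nat).
Hypothesis ha : forall i, increasing_enum (a i) (A i).
Hypothesis hb : increasing_enum b (\bigcup_(i in [set: 'I_k]) A i).

Lemma memA i x : A i x -> exists m, a i m = x.
Proof. by rewrite -(proj2 (ha i)) => -[m _ <-]; exists m. Qed.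

Lemma memA' i m : A i (a i m).
Proof. by rewrite -(proj2 (ha i)); exists m. Qed.

Lemma memB n : exists i, A i (b n).
Proof.
have : (\bigcup_(i in [set: 'I_k]) A i) (b n) by rewrite -(proj2 hb); exists n.
by case=> i _ h; exists i.
Qed.

Lemma memB' i x : A i x -> exists n, b n = x.
Proof.
move=> h; have : (\bigcup_(i in [set: 'I_k]) A i) x by exists i.
by rewrite -(proj2 hb) => -[n _ <-]; exists n.
Qed.

Lemma up_comb i M : exists N, forall n, (N <= n)%N ->
  exists m, (M <= m)%N /\ (a i m <= b n)%N /\ (b n.+1 <= a i m.+1)%N.
Proof.
have hai := proj1 (ha i); have hbi := proj1 hb.
exists (a i M) => n hn.
have h0 : (a i 0 <= b n)%N.
  have := incr_ge hbi n; have : (a i 0 <= a i M)%N by rewrite incr_leE.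
  lia.
have [m /andP[h1 h2]] := bracket hai _ h0.
exists m; split; last split => //.
  rewrite leqNgt; apply/negP => hm.
  have : (a i m.+1 <= a i M)%N by rewrite incr_leE.
  have := incr_ge hbi n; lia.
have [j hj] := memB' _ _ (memA' i m.+1).
rewrite -hj incr_leE //; rewrite -hj incr_ltE // in h2.
Qed.

Lemma pig n : exists i p q, (n <= p < q)%N /\ (q <= n + k)%N /\ A i (b p) /\ A i (b q).
Proof.
have hex : forall j : 'I_k.+1, exists i, A i (b (n + j)) by move=> j; apply: memB.
case: (boolp.choice hex) => g hg.
have : ~~ injectiveb g.
  apply/negP => /injectiveP inj; have := leq_card _ inj.
  by rewrite !card_ord ltnn.
move=> /injectivePn [j1 [j2 hne heq]].
have hj1 := ltn_ord j1; have hj2 := ltn_ord j2.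
case: (ltngtP j1 j2) => h.
- exists (g j1), (n + j1), (n + j2); split; first lia.
  split; first lia.
  by split; [exact: hg | rewrite heq; exact: hg].
- exists (g j1), (n + j2), (n + j1); split; first lia.
  split; first lia.
  by split; [rewrite heq; exact: hg | exact: hg].
- by move: hne; rewrite (val_inj h) eqxx.
Qed.

End Comb.
Arguments memA {k A a} ha {i x} _.
Arguments memA' {k A a} ha i m.
Arguments memB {k A b} hb n.
Arguments memB' {k A b} hb {i x} _.
Arguments up_comb {k A a b} ha hb i M.
Arguments pig {k A b} hb n.

Section Real.
Variable R : realType.
Variables (k : nat) (A : 'I_k -> set nat) (a : 'I_k -> nat -> nat) (b : nat -> nat).
Hypothesis ha : forall i, increasing_enum (a i) (A i).
Hypothesis hb : increasing_enum b (\bigcup_(i in [set: 'I_k]) A i).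
Hypothesis hA : forall i x, A i x -> (0 < x)%N.

Lemma ratio_le (p q r t : nat) : (0 < r)%N -> (p <= q)%N -> (r <= t)%N ->
  (p%:R / t%:R : R) <= q%:R / r%:R.
Proof.
move=> r0 pq rt; have t0 : (0 < t)%N by apply: leq_trans rt.
rewrite ler_pdivrMr ?ltr0n // mulrAC ler_pdivlMr ?ltr0n //.
by rewrite -!natrM ler_nat leq_mul.
Qed.

Lemma apos i m : (0 < a i m)%N.
Proof. exact: hA _ _ (memA' ha i m). Qed.

Lemma bpos n : (0 < b n)%N.
Proof. by have [i hi] := memB hb n; exact: hA _ _ hi. Qed.

Lemma ratio_ge0 (u : nat -> nat) n : (0 <= ratio_seq (R:=R) u n)%E.
Proof. by rewrite /ratio_seq lee_fin divr_ge0. Qed.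

Lemma upper i : (limn_esup (ratio_seq (R:=R) b) <= limn_esup (ratio_seq (R:=R) (a i)))%E.
Proof.
apply: esup_le_cmp => M; have [N hN] := up_comb ha hb i M.
exists N => n hn; have [m [hm [h1 h2]]] := hN n hn.
exists m; split => //; rewrite /ratio_seq lee_fin; apply: ratio_le => //.
exact: apos.
Qed.

Lemma lower_e (e : R) : (limn_esup (ratio_seq (R:=R) b) < e%:E)%E ->
  0 < e /\ exists i, (limn_einf (ratio_seq (R:=R) (a i)) <= (e ^+ k)%:E)%E.
Proof.
move=> /esup_lt_ev [N hN].
have e0 : 0 < e.
  have := hN N (leqnn N); rewrite /ratio_seq lte_fin; apply: le_lt_trans.
  by rewrite divr_ge0.
have hr n : (N <= n)%N -> (b n.+1)%:R < e * (b n)%:R.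
  move=> hn; have := hN n hn; rewrite /ratio_seq lte_fin ltr_pdivrMr ?ltr0n ?bpos//.
have hpow n j : (N <= n)%N -> (b (n + j))%:R <= e ^+ j * (b n)%:R.
  move=> hn; elim: j => [|j IH]; first by rewrite addn0 expr0 mul1r.
  rewrite addnS; apply: le_trans (ltW (hr _ _)) _.
    by apply: leq_trans hn (leq_addr _ _).
  by rewrite exprS -mulrA ler_wpM2l // ltW.
split => //.
have hio := @io k (fun i m => (ratio_seq (R:=R) (a i) m <= (e ^+ k)%:E)%E) a
  (fun i => proj1 (ha i)) N.
have [i hi] : exists i, forall M, exists m, (M <= m)%N /\
   (ratio_seq (R:=R) (a i) m <= (e ^+ k)%:E)%E.
  apply: hio => n hn.
  have [i [p [q [hpq [hqk [hAp hAq]]]]]] := pig hb n.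
  have [m em] := memA ha hAp; have [m' em'] := memA ha hAq.
  have hbi := proj1 hb; have hai := proj1 (ha i).
  have hmm : (m < m')%N.
    by rewrite -(incr_ltE hai) em em' incr_ltE //; case/andP: hpq.
  exists i, m; split.
    rewrite em; apply: leq_trans (incr_ge hbi p); by case/andP: hpq.
  rewrite /ratio_seq lee_fin.
  apply: le_trans (_ : (b q)%:R / (b p)%:R <= _).
    apply: ratio_le; [exact: bpos | by rewrite -em' incr_leE | by rewrite em].
  apply: le_trans (_ : (b (n + k))%:R / (b n)%:R <= _).
    apply: ratio_le; [exact: bpos | by rewrite incr_leE | ].
    by rewrite incr_leE //; case/andP: hpq.
  by rewrite ler_pdivrMr ?ltr0n ?bpos // hpow.
by exists i; apply: einf_le_io.
Qed.

End Real.

Theorem lemma2p4 (R : realType) (k : nat) (zeta : 'I_k -> R)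
  (hk : (1 <= k)%N)
  (hz : forall i, 0 < zeta i < 1)
  (hind : Q_lin_indep1 zeta)
  (s : nat) (hs : (2 <= s)%N)
  (a : 'I_k -> nat -> nat) (b : nat -> nat)
  (ha : forall i, increasing_enum (a i) (nz_pos s (zeta i)))
  (hb : increasing_enum b (\bigcup_(i in [set: 'I_k]) nz_pos s (zeta i))) :
  ((\big[Order.min/+oo%E]_(i < k)
      poweR (limn_einf (ratio_seq (R:=R) (a i))) (k%:R^-1) <= limn_esup (ratio_seq (R:=R) b))%E
  /\ (limn_esup (ratio_seq (R:=R) b) <=
      \big[Order.min/+oo%E]_(i < k) limn_esup (ratio_seq (R:=R) (a i)))%E).
Proof.
have hA : forall i x, nz_pos s (zeta i) x -> (0 < x)%N by move=> i x [].
split.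
  apply: le_eps => e he.
  have [e0 [i hi]] := @lower_e R k _ a b ha hb hA e he.
  apply: le_trans (bigmin_le _ i _) _.
  apply: (@le_trans _ _ (poweR ((e ^+ k)%:E) (k%:R^-1))).
    apply: (gt0_ler_poweR _) => //.
    - rewrite in_itv /= leey andbT; apply: einf_ge0 => n; exact: ratio_ge0.
    - by rewrite in_itv /= leey andbT lee_fin exprn_ge0 // ltW.
  have e0' : 0 <= e by exact: ltW.
  rewrite poweR_EFin -powR_mulrn // -powRrM mulfV; last by rewrite pnatr_eq0 -lt0n.
  by rewrite powRr1.
apply: le_bigmin => //; first exact: leey.
move=> i _; exact: (@upper R k _ a b ha hb hA i).
Qed.
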